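(* Let $B=B_{\mathbb{S}^3_\theta}$ carry the Riemannian structure induced from $\mathbb{R}^4_\theta$ as described in the context, and let $\widetilde f=\tfrac12\sum_{i,j}h_{ij}z^iz^j=\tfrac12(z^1z^3-z^2z^4)$ (a central element of $B$) and $C=B/(\widetilde f)$. Then the $1$-form $\widetilde\nu:=\mathrm{d}_B\widetilde f=\sum_{i,j=1}^4h_{ij}\,z^i\,\mathrm{d}z^j\in\Omega^1_B$ is central and satisfies $[g_B^{-1}(\widetilde\nu\otimes_B\widetilde\nu)]=1$ in $C$; hence $C$ is a noncommutative hypersurface of $B$ (with basis $[\widetilde\nu]$ of $N^1_C$). The projector $\widetilde\Pi:\widetilde q_!(\Omega^1_B)\to\widetilde q_!(\Omega^1_B)$, $[\omega]\mapsto[\omega-g_B^{-1}(\omega\otimes_B\widetilde\nu)\widetilde\nu]$, is given by $\widetilde\Pi(\mathrm{d}z^i)=\mathrm{d}z^i+(-1)^i\,z^i\,\widetilde\nu$.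
   Context: $\theta\in\mathbb{R}$; $R=(R^{ab})$ (row $a$, column $b$) with rows $(1,e^{-i\theta},1,e^{i\theta})$, $(e^{i\theta},1,e^{-i\theta},1)$, $(1,e^{i\theta},1,e^{-i\theta})$, $(e^{-i\theta},1,e^{i\theta},1)$; $A=\mathbb{C}\langle z^1,\dots,z^4\rangle/(z^iz^j-R^{ji}z^jz^i)$; $\Omega^1_A=\bigoplus_iA\,\mathrm{d}z^i$ free left module with $\mathrm{d}z^i\,z^j=R^{ji}z^j\mathrm{d}z^i$, $\mathrm{d}$ Leibniz extension of $z^i\mapsto\mathrm{d}z^i$. $P$ with rows $(0,0,1,0),(0,0,0,1),(1,0,0,0),(0,1,0,0)$, $(g_{ij})=\tfrac12P$, $(g^{ij})=2P$; $(h_{ij})=\tfrac12Q$ with $Q$ having rows $(0,0,1,0),(0,0,0,-1),(1,0,0,0),(0,-1,0,0)$. $B=A/(f)$ with $f=\tfrac12(z^1z^3+z^2z^4-1)$; $\Omega^1_B$ is the quotient of $\Omega^1_A/(f\Omega^1_A+\Omega^1_Af)$ by the $B$-subbimodule generated by $[\mathrm{d}f]$, with $\mathrm{d}_B[a]=[\mathrm{d}a]$ (classes are suppressed in notation). The induced Riemannian structure on $B$ is given by $g_B=\sum g_{ij}\mathrm{d}z^i\otimes_B\mathrm{d}z^j$, inverse metric $g_B^{-1}(\mathrm{d}z^i\otimes_B\mathrm{d}z^j)=g^{ij}-z^iz^j$ (extended as $B$-bimodule map), $\nabla_B(\mathrm{d}z^i)=-z^i\sum g_{kl}\mathrm{d}z^k\otimes_B\mathrm{d}z^l$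 (with left Leibniz rule), $\sigma_B(\mathrm{d}z^i\otimes_B\mathrm{d}z^j)=R^{ji}\mathrm{d}z^j\otimes_B\mathrm{d}z^i$. Hypersurface notions (for an algebra $B$ with calculus $\Omega^1_B$ and inverse metric $g_B^{-1}$): for $C=B/J$, $J$ a two-sided ideal, $\widetilde q:B\to C$, $\widetilde q_!(\Omega^1_B)=\Omega^1_B/(J\Omega^1_B+\Omega^1_BJ)$, $N^1_C$ the $C$-subbimodule generated by $[\mathrm{d}_Ba]$, $a\in J$, $\Omega^1_C=\widetilde q_!(\Omega^1_B)/N^1_C$. $C$ is a (metrically co-orientable) noncommutative hypersurface if $N^1_C$ is free of rank one with basis $[\widetilde\nu]$, $\widetilde\nu\in\Omega^1_B$ central, $[g_B^{-1}(\widetilde\nu\otimes_B\widetilde\nu)]=1\in C$. *)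

(* Defs.v *)
From HB Require Import structures.
From mathcomp Require Import all_boot all_algebra.
From mathcomp Require Import reals trigo.
From mathcomp.real_closed Require Import complex.
From mathcomp Require Import finmap.
From mathcomp.multinomials Require Import monalg.

Set Implicit Arguments.
Unset Strict Implicit.
Unset Printing Implicit Defensive.

Import GRing.Theory.
Local Open Scope ring_scope.

(* Conventions.  Indices 1..4 of the paper are the ordinals 0..3 of 'I_4.    *)
(* All algebras of the paper are quotients of the free algebra               *)
(*   F = C<z^1,..,z^4> = {malg C[{fmonom 'I_4}]},                            *)
(* and all bimodules (Omega^1_A, Omega^1_B, q_!(Omega^1_B), N^1_C) are       *)
(* quotients / subquotients of Om = 'rV[F]_4 (the free left F-module on      *)
(* dz^1..dz^4).  A quotient X/Z is represented by the ambient object X       *)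
(* together with the predicate Z describing the kernel; equalities in the    *)
(* quotient are stated as "difference of lifts lies in Z".                   *)

Section NCSphere.
Variable R : realType.
Variable theta : R.

Definition CC := R[i].
Definition Fr := {malg CC[{fmonom 'I_4}]}.
Definition Om := 'rV[Fr]_4.

Definition cexpi (x : R) : CC := (cos x +i* sin x)%C.

(* the matrix R = (R^{ab}), row a, column b *)
Definition Rc (a b : 'I_4) : CC :=
  let e := cexpi theta in let e' := cexpi (- theta) in
  match nat_of_ord a, nat_of_ord b with
  | 0, 0 => 1 | 0, 1 => e' | 0, 2 => 1 | 0, _ => e
  | 1, 0 => e | 1, 1 => 1 | 1, 2 => e' | 1, _ => 1
  | 2, 0 => 1 | 2, 1 => e | 2, 2 => 1 | 2, _ => e'
  | _, 0 => e' | _, 1 => 1 | _, 2 => e | _, _ => 1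
  end.

Definition z (i : 'I_4) : Fr := << fmu i >>.
Definition zw (s : seq 'I_4) : Fr := \prod_(j <- s) z j.

Definition dz (i : 'I_4) : Om := delta_mx 0 i.

(* dz^i z^j = R^{ji} z^j dz^i : twisting character and automorphism *)
Definition chi (i : 'I_4) (s : seq 'I_4) : CC := \prod_(j <- s) Rc j i.
Definition tw (i : 'I_4) (b : Fr) : Fr :=
  \sum_(w <- msupp b) (b@_w * chi i w) *: (<< w >> : Fr).

(* right action of Fr on Om (left action is the scaling *:) *)
Definition ract (v : Om) (b : Fr) : Om := \row_j (v 0 j * tw j b).

(* the differential d : Fr -> Om, Leibniz extension of z^i |-> dz^i *)
Definition dword (s : seq 'I_4) : Om :=
  \sum_(k < size s)
     (zw (take k s) *: ract (dz (nth ord0 s k)) (zw (drop k.+1 s))).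
Definition dd (b : Fr) : Om := \sum_(w <- msupp b) (b@_w)%:MP *: dword w.

Inductive ideal_gen (S : Fr -> Prop) : Fr -> Prop :=
| ig_gen u s v : S s -> ideal_gen S (u * s * v)
| ig_0 : ideal_gen S 0
| ig_add x y : ideal_gen S x -> ideal_gen S y -> ideal_gen S (x + y).

Inductive bimod_gen (S : Om -> Prop) : Om -> Prop :=
| bg_gen a s b : S s -> bimod_gen S (ract (a *: s) b)
| bg_0 : bimod_gen S 0
| bg_add x y : bimod_gen S x -> bimod_gen S y -> bimod_gen S (x + y).

Definition relA (x : Fr) : Prop :=
  exists i j : 'I_4, x = z i * z j - (Rc j i)%:MP * (z j * z i).
Definition IA : Fr -> Prop := ideal_gen relA.

Definition halfF : Fr := ((2 : CC)^-1)%:MP.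

Definition fA : Fr := halfF * (z 0 * z 2 + z 1 * z 3 - 1).

(* B = A/(f) = Fr / IB *)
Definition IB : Fr -> Prop := ideal_gen (fun x => relA x \/ x = fA).

(* Omega^1_A = Om / ZA *)
Definition ZA (v : Om) : Prop := forall i, IA (v 0 i).

(* Omega^1_B = Om / ZB :  Omega^1_A / (f Omega^1_A + Omega^1_A f + <<[df]>>) *)
Definition ZB : Om -> Prop :=
  bimod_gen (fun v => ZA v \/ (exists w, v = fA *: w)
                      \/ (exists w, v = ract w fA) \/ v = dd fA).

Definition gup (i j : 'I_4) : Fr :=
  if nat_of_ord j == ((nat_of_ord i + 2) %% 4)%N then 2%:R else 0.
Definition hlow (i j : 'I_4) : Fr :=
  if nat_of_ord j == ((nat_of_ord i + 2) %% 4)%N then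
    (if odd i then - halfF else halfF) else 0.

(* g_B^{-1}(omega (x)_B eta), the B-bimodule extension of
   dz^i (x) dz^j |-> g^{ij} - z^i z^j, evaluated on lifts:
   g^{-1}(a dz^i (x) b dz^j) = a tw_i(b) (g^{ij} - z^i z^j)            *)
Definition ginvB (om eta : Om) : Fr :=
  \sum_(i < 4) \sum_(j < 4) om 0 i * tw i (eta 0 j) * (gup i j - z i * z j).

(* Hypersurface notions for a quotient C = B/J, J two-sided ideal of B.     *)
(* IC is the preimage of J in Fr (so C = Fr / IC).                         *)

(* q_!(Omega^1_B) = Omega^1_B / (J Omega^1_B + Omega^1_B J) = Om / ZQ IC *)
Definition ZQ (IC : Fr -> Prop) : Om -> Prop :=
  bimod_gen (fun v => ZB v \/
     exists a w, IC a /\ (v = a *: w \/ v = ract w a)).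

(* lift of N^1_C : the C-subbimodule generated by the [d_B a], a in J
   (N^1_C = NCl IC / ZQ IC) *)
Definition NCl (IC : Fr -> Prop) : Om -> Prop :=
  bimod_gen (fun v => ZQ IC v \/ exists a, IC a /\ v = dd a).

(* C is a metrically co-orientable noncommutative hypersurface with
   normal nu : N^1_C is free of rank one (as a left C-module) with basis
   [nu], nu is central in Omega^1_B and [g_B^{-1}(nu (x) nu)] = 1 in C. *)
Definition nc_hypersurface (IC : Fr -> Prop) (nu : Om) : Prop :=
  [/\ forall b : Fr, ZB (b *: nu - ract nu b),
      IC (ginvB nu nu - 1),
      NCl IC nu,
      forall v, NCl IC v -> exists c : Fr, ZQ IC (v - c *: nu)
    & forall c : Fr, ZQ IC (c *: nu) -> IC c].

Definition ftil : Fr := \sum_(i < 4) \sum_(j < 4) halfF * hlow i j * z i * z j.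
Definition IC13 : Fr -> Prop :=
  ideal_gen (fun x => relA x \/ x = fA \/ x = ftil).
Definition nutil : Om := dd ftil.

Definition Pitil (om : Om) : Om := om - ginvB om nutil *: nutil.

End NCSphere.

(* Main.v *)
Require Import Defs.
From HB Require Import structures.
From mathcomp Require Import all_boot all_algebra.
From mathcomp Require Import reals trigo.
From mathcomp.real_closed Require Import complex.
From mathcomp Require Import finmap.
From mathcomp.multinomials Require Import monalg.
From mathcomp Require Import ring.
Import GRing.Theory Num.Theory.
Local Open Scope ring_scope.

Section Aux.
Variable R : realType.
Variable theta : R.

Local Notation Fr := (Fr R).
Local Notation Om := (Om R).
Local Notation CC := (CC R).
Local Notation z := (z R).
Local Notation dz := (dz R).
Local Notation tw := (tw theta).
Local Notation ract := (ract theta).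
Local Notation chi := (chi theta).
Local Notation dword := (dword theta).
Local Notation dd := (dd theta).
Local Notation zw := (zw R).

Lemma cexpiN (t : R) : cexpi t * cexpi (- t) = 1.
Proof.
rewrite /cexpi cosN sinN.
change ((cos t * cos t - sin t * (- sin t)) +i* (cos t * (- sin t) + sin t * cos t) = (1 +i* 0))%C.
congr (_ +i* _)%C; last by ring.
by rewrite mulrN opprK -!expr2 cos2Dsin2.
Qed.

Lemma cexpiN' (t : R) : cexpi (- t) * cexpi t = 1.
Proof. by rewrite mulrC cexpiN. Qed.

Lemma Rc_inv (i j : 'I_4) : Rc theta i j * Rc theta j i = 1.
Proof.
case: i => [[|[|[|[|i]]]] Hi] //; case: j => [[|[|[|[|j]]]] Hj] //;
  rewrite /Rc /= ?mul1r ?mulr1 ?cexpiN ?cexpiN' //.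
Qed.

Lemma mulrCc (x : Fr) (c : CC) : x * c%:MP = c *: x.
Proof.
rewrite (malgMEw (fsubset_refl _) (msuppC_le c)) malgZ_def /fgscale.
apply: eq_bigr => k _; rewrite big_seq_fset1 mcoeffC eqxx mulr1n mulm1 mulrC //.
Qed.

Lemma scalerAr' (c : CC) (x y : Fr) : x * (c *: y) = c *: (x * y).
Proof. by rewrite -mul_malgC mulrA mulrCc scalerAl. Qed.

Lemma mulCc (x : Fr) (c : CC) : c%:MP * x = x * c%:MP.
Proof. by rewrite mulrCc mul_malgC. Qed.

Lemma monalgUZ (c : CC) (w : fmonom 'I_4) : << c *g w >> = c *: (<< w >> : Fr).
Proof. by apply/malgP => k; rewrite mcoeffZ !mcoeffU mulrnAr mulr1. Qed.


Lemma malg_ind (P : Fr -> Prop) : P 0 -> (forall x y, P x -> P y -> P (x + y)) ->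
  (forall c w, P << c *g w >>) -> forall x, P x.
Proof. by move=> P0 PD PU x; rewrite (monalgE x); apply: big_ind. Qed.

Definition twh (i : 'I_4) (w : fmonom 'I_4) : Fr := chi i w *: << w >>.

Lemma tw_mmap i b : tw i b = mmap (fun c : CC => (c%:MP : Fr)) (twh i) b.
Proof.
rewrite /tw mmapE; apply: eq_bigr => w _.
by rewrite mul_malgC /twh scalerA.
Qed.

Lemma twD i : {morph tw i : x y / x + y}.
Proof. by move=> x y; rewrite !tw_mmap mmapD. Qed.
Lemma tw0 i : tw i 0 = 0.
Proof. by rewrite tw_mmap mmap0. Qed.
Lemma twN i : {morph tw i : x / - x}.
Proof. by move=> x; rewrite !tw_mmap mmapN. Qed.
Lemma twB i : {morph tw i : x y / x - y}.
Proof. by move=> x y; rewrite !tw_mmap mmapB. Qed.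
Lemma twU i c w : tw i << c *g w >> = (c * chi i w) *: << w >>.
Proof. by rewrite tw_mmap mmapU mul_malgC /twh scalerA. Qed.
Lemma tw_sum i (I : Type) (r : seq I) (P : pred I) (F : I -> Fr) :
  tw i (\sum_(k <- r | P k) F k) = \sum_(k <- r | P k) tw i (F k).
Proof. exact: (big_morph _ (twD i) (tw0 i)). Qed.

End Aux.

Section Aux.
Variable R : realType.
Variable theta : R.

Local Notation Fr := (Fr R).
Local Notation Om := (Om R).
Local Notation CC := (CC R).
Local Notation z := (z R).
Local Notation dz := (dz R).
Local Notation tw := (tw theta).
Local Notation ract := (ract theta).
Local Notation chi := (chi theta).
Local Notation dword := (dword theta).
Local Notation dd := (dd theta).
Local Notation zw := (zw R).
Lemma mulUU (c d : CC) (w1 w2 : fmonom 'I_4) :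
  << c *g w1 >> * << d *g w2 >> = << c * d *g mmul w1 w2 >> :> Fr.
Proof. by rewrite malgM_def fgmulUU. Qed.

Lemma zw_cons j s : zw (j :: s) = z j * zw s. Proof. by rewrite /Defs.zw big_cons. Qed.

Lemma zwU (s : seq 'I_4) : zw s = << FMonom s >> :> Fr.
Proof.
elim: s => [|j s IH].
  by rewrite /Defs.zw big_nil -fmoneE -mpolyC1E.
rewrite zw_cons [in LHS]IH /Defs.z mulUU mulr1.
congr (<< _ >>).
by rewrite fmuE; apply: val_inj; rewrite /= fmM.
Qed.

Lemma twW i (c : CC) s : tw i (c *: zw s) = (c * chi i s) *: zw s.
Proof.
rewrite zwU -monalgUZ.
exact: twU.
Qed.

Lemma span_ind (P : Fr -> Prop) : P 0 -> (forall x y, P x -> P y -> P (x + y)) ->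
  (forall c s, P (c *: zw s)) -> forall x, P x.
Proof.
move=> P0 PD PW; apply: malg_ind => // c w.
case: w => s; rewrite monalgUZ -zwU; exact: PW.
Qed.

Lemma dd_comp b j : (dd b) 0 j = mmap (fun c : CC => (c%:MP : Fr)) (fun w : {fmonom 'I_4} => dword w 0 j) b.
Proof.
rewrite /Defs.dd summxE mmapE; apply: eq_bigr => w _.
by rewrite mxE.
Qed.

Lemma ddD x y : dd (x + y) = dd x + dd y.
Proof.
apply/rowP => j; rewrite [in RHS]mxE [in LHS]dd_comp [in LHS]mmapD.
by congr (_ + _); symmetry; apply: dd_comp.
Qed.

Lemma ddW (c : CC) s : dd (c *: zw s) = c%:MP *: dword s.
Proof.
apply/rowP => j; rewrite [in RHS]mxE [in LHS]dd_comp [in LHS]zwU -[in LHS]monalgUZ [in LHS]mmapU.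
by [].
Qed.
End Aux.

Section Aux.
Variable R : realType.
Variable theta : R.

Local Notation Fr := (Fr R).
Local Notation Om := (Om R).
Local Notation CC := (CC R).
Local Notation z := (z R).
Local Notation dz := (dz R).
Local Notation tw := (tw theta).
Local Notation ract := (ract theta).
Local Notation chi := (chi theta).
Local Notation dword := (dword theta).
Local Notation dd := (dd theta).
Local Notation zw := (zw R).
Section Gen.
Variable T : lalgType CC.
Variable cst : CC -> T.
Hypothesis cstE : forall c (x : T), cst c * x = c *: x.
Hypothesis cstEr : forall c (x : T), x * cst c = c *: x.
Hypothesis scAr : forall c (x y : T), x * (c *: y) = c *: (x * y).
Variable zz : 'I_4 -> T.
Variable twg : 'I_4 -> T -> T.
Definition zwg (s : seq 'I_4) : T := \prod_(j <- s) zz j.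
Hypothesis twgD : forall i x y, twg i (x + y) = twg i x + twg i y.
Hypothesis twgW : forall i c s, twg i (c *: zwg s) = (c * chi i s) *: zwg s.
Hypothesis spanI : forall P : T -> Prop, P 0 -> (forall x y, P x -> P y -> P (x + y)) ->
  (forall c s, P (c *: zwg s)) -> forall x, P x.
Definition ractg (v : 'rV[T]_4) (b : T) : 'rV[T]_4 := \row_j (v 0 j * twg j b).
Definition dzg (i : 'I_4) : 'rV[T]_4 := delta_mx 0 i.
Definition dwordg (s : seq 'I_4) : 'rV[T]_4 :=
  \sum_(k < size s)
     (zwg (take k s) *: ractg (dzg (nth ord0 s k)) (zwg (drop k.+1 s))).
Variable ddg : T -> 'rV[T]_4.
Hypothesis ddgD : forall x y, ddg (x + y) = ddg x + ddg y.
Hypothesis ddgW : forall c s, ddg (c *: zwg s) = cst c *: dwordg s.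

Lemma cst1 c : cst c = c *: 1.
Proof. by rewrite -cstE mulr1. Qed.
Lemma cstM c d : cst (c * d) = cst c * cst d.
Proof. by rewrite cstE !cst1 scalerA. Qed.
Lemma cstD c d : cst (c + d) = cst c + cst d.
Proof. by rewrite !cst1 scalerDl. Qed.
Lemma cstN c : cst (- c) = - cst c.
Proof. by rewrite !cst1 scaleNr. Qed.
Lemma cst_1 : cst 1 = 1.
Proof. by rewrite cst1 scale1r. Qed.
Lemma cst_0 : cst 0 = 0.
Proof. by rewrite cst1 scale0r. Qed.
Lemma cst_comm c x : cst c * x = x * cst c.
Proof. by rewrite cstE cstEr. Qed.

Lemma zwg_nil : zwg [::] = 1. Proof. by rewrite /zwg big_nil. Qed.
Lemma zwg_cons j s : zwg (j :: s) = zz j * zwg s. Proof. by rewrite /zwg big_cons. Qed.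
Lemma zwg_cat s t : zwg (s ++ t) = zwg s * zwg t. Proof. by rewrite /zwg big_cat. Qed.
Lemma zwg1 j : zwg [:: j] = zz j. Proof. by rewrite zwg_cons zwg_nil mulr1. Qed.
Lemma chi_nil i : chi i [::] = 1. Proof. by rewrite /Defs.chi big_nil. Qed.
Lemma chi_cons i j s : chi i (j :: s) = Rc theta j i * chi i s.
Proof. by rewrite /Defs.chi big_cons. Qed.
Lemma chi_cat i s t : chi i (s ++ t) = chi i s * chi i t.
Proof. by rewrite /Defs.chi big_cat. Qed.

Lemma twg0 i : twg i 0 = 0.
Proof. by have := twgD i 0 0; rewrite addr0 => H; apply: (addrI (twg i 0)); rewrite -H addr0. Qed.
Lemma twgN i x : twg i (- x) = - twg i x.
Proof. by apply/eqP; rewrite -addr_eq0 -twgD addNr twg0. Qed.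
Lemma twgB i x y : twg i (x - y) = twg i x - twg i y.
Proof. by rewrite twgD twgN. Qed.
Lemma twg_sum i (I : Type) (r : seq I) (P : pred I) (F : I -> T) :
  twg i (\sum_(k <- r | P k) F k) = \sum_(k <- r | P k) twg i (F k).
Proof. exact: (big_morph _ (twgD i) (twg0 i)). Qed.
Lemma twgZ i c x : twg i (c *: x) = c *: twg i x.
Proof.
elim/spanI: x => [|x y Hx Hy|d s]; first by rewrite scaler0 twg0 scaler0.
  by rewrite scalerDr !twgD Hx Hy scalerDr.
by rewrite scalerA !twgW scalerA mulrA.
Qed.
Lemma twgM i x y : twg i (x * y) = twg i x * twg i y.
Proof.
elim/spanI: x => [|x1 x2 H1 H2|c s].
  by rewrite mul0r twg0 mul0r.
  by rewrite mulrDl !twgD H1 H2 mulrDl.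
elim/spanI: y => [|y1 y2 H1 H2|d t].
  by rewrite mulr0 twg0 mulr0.
  by rewrite mulrDr !twgD H1 H2 mulrDr.
have E : forall a b u v, (a *: zwg u) * (b *: zwg v) = (a * b) *: zwg (u ++ v).
  by move=> a b u v; rewrite -scalerAl scAr scalerA zwg_cat.
rewrite E !twgW E chi_cat; congr (_ *: _); ring.
Qed.
Lemma twg1 i : twg i 1 = 1.
Proof. by rewrite -zwg_nil -[zwg _]scale1r twgW chi_nil mulr1. Qed.
Lemma twg_z i j : twg i (zz j) = Rc theta j i *: zz j.
Proof. by rewrite -{1}zwg1 -{1}[zwg _]scale1r twgW chi_cons chi_nil mul1r mulr1 zwg1. Qed.
Lemma twg_cst i c : twg i (cst c) = cst c.
Proof. by rewrite cst1 twgZ twg1. Qed.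

Lemma ractgD v w b : ractg (v + w) b = ractg v b + ractg w b.
Proof. by apply/rowP => j; rewrite !mxE mulrDl. Qed.
Lemma ractgDr v b b' : ractg v (b + b') = ractg v b + ractg v b'.
Proof. by apply/rowP => j; rewrite !mxE twgD mulrDr. Qed.
Lemma ractgZ (a : T) v b : ractg (a *: v) b = a *: ractg v b.
Proof. by apply/rowP => j; rewrite !mxE mulrA. Qed.
Lemma ractgZr (c : CC) v b : ractg v (c *: b) = cst c *: ractg v b.
Proof. by apply/rowP => j; rewrite !mxE twgZ scAr cstE. Qed.
Lemma ractgA v a b : ractg (ractg v a) b = ractg v (a * b).
Proof. by apply/rowP => j; rewrite !mxE twgM mulrA. Qed.
Lemma ractg1 v : ractg v 1 = v.
Proof. by apply/rowP => j; rewrite !mxE twg1 mulr1. Qed.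
Lemma ractg0 b : ractg 0 b = 0.
Proof. by apply/rowP => j; rewrite !mxE mul0r. Qed.
Lemma ractg0r v : ractg v 0 = 0.
Proof. by apply/rowP => j; rewrite !mxE twg0 mulr0. Qed.
Lemma ractgN v b : ractg (- v) b = - ractg v b.
Proof. by apply/rowP => j; rewrite !mxE mulNr. Qed.
Lemma ractgB v w b : ractg (v - w) b = ractg v b - ractg w b.
Proof. by rewrite ractgD ractgN. Qed.
Lemma ractg_sum (J : Type) (r : seq J) (P : pred J) (F : J -> 'rV[T]_4) b :
  ractg (\sum_(j <- r | P j) F j) b = \sum_(j <- r | P j) ractg (F j) b.
Proof. exact: (big_morph (ractg^~ b) (fun v w => ractgD v w b) (ractg0 b)). Qed.
Lemma ractg_dz i b : ractg (dzg i) b = twg i b *: dzg i.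
Proof.
apply/rowP => j; rewrite !mxE eqxx andTb.
by case: (eqVneq i j) => [<-|ne]; rewrite ?mul1r ?mulr1 ?mul0r ?mulr0.
Qed.
Lemma ractg_cst v c : ractg v (cst c) = cst c *: v.
Proof.
by apply/rowP => j; rewrite !mxE twg_cst cst_comm.
Qed.

Inductive igen (S : T -> Prop) : T -> Prop :=
| igg u s v : S s -> igen S (u * s * v)
| ig0 : igen S 0
| igD x y : igen S x -> igen S y -> igen S (x + y).
Arguments igg {S} u {s} v. Arguments ig0 {S}. Arguments igD {S}.

Section Ideal.
Context {S : T -> Prop}.
Local Notation I := (igen S).
Lemma I_gen s : S s -> I s.
Proof. by move=> Ss; have := igg 1 1 Ss; rewrite mul1r mulr1. Qed.
Lemma I_mull u x : I x -> I (u * x).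
Proof.
elim=> [u' s v Ss|| x1 x2 _ H1 _ H2].
  have -> : u * (u' * s * v) = (u * u') * s * v by rewrite !mulrA.
  exact: igg.
  by rewrite mulr0; apply: ig0.
by rewrite mulrDr; apply: igD.
Qed.
Lemma I_mulr v x : I x -> I (x * v).
Proof.
elim=> [u s v' Ss|| x1 x2 _ H1 _ H2]; first by rewrite -mulrA; apply: igg.
  by rewrite mul0r; apply: ig0.
by rewrite mulrDl; apply: igD.
Qed.
Lemma I_add x y : I x -> I y -> I (x + y). Proof. exact: igD. Qed.
Lemma I_0 : I 0. Proof. exact: ig0. Qed.
Lemma I_opp x : I x -> I (- x).
Proof. by move=> H; rewrite -mulN1r; apply: I_mull. Qed.
Lemma I_sub x y : I x -> I y -> I (x - y).
Proof. by move=> Hx Hy; apply: I_add => //; apply: I_opp. Qed.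
Lemma I_scale (c : CC) x : I x -> I (c *: x).
Proof. by move=> H; rewrite -cstE; apply: I_mull. Qed.
Lemma I_sum (J : Type) (r : seq J) (P : pred J) (F : J -> T) :
  (forall j, P j -> I (F j)) -> I (\sum_(j <- r | P j) F j).
Proof. by move=> H; apply: big_ind => //; [apply: I_0 | apply: I_add]. Qed.
Lemma I_eq x y : x = y -> I y -> I x. Proof. by move=> ->. Qed.
Lemma I_subr x y : I (x - y) -> I y -> I x.
Proof. by move=> H1 H2; rewrite -(subrK y x); apply: I_add. Qed.
End Ideal.

Lemma I_mono (S S' : T -> Prop) : (forall x, S x -> S' x) ->
  forall x, igen S x -> igen S' x.
Proof.
move=> ST x; elim=> [u s v Ss||x1 x2 _ H1 _ H2]; last by apply: igD.
  by apply: igg; apply: ST.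
exact: ig0.
Qed.

Inductive bgen (S : 'rV[T]_4 -> Prop) : 'rV[T]_4 -> Prop :=
| bgg a s b : S s -> bgen S (ractg (a *: s) b)
| bg0 : bgen S 0
| bgD x y : bgen S x -> bgen S y -> bgen S (x + y).
Arguments bgg {S} a {s} b. Arguments bg0 {S}. Arguments bgD {S}.

Section Bimod.
Context {S : 'rV[T]_4 -> Prop}.
Local Notation M := (bgen S).
Lemma M_gen s : S s -> M s.
Proof. by move=> Ss; have := bgg 1 1 Ss; rewrite scale1r ractg1. Qed.
Lemma M_act a b x : M x -> M (ractg (a *: x) b).
Proof.
elim=> [a' s b' Ss||x1 x2 _ H1 _ H2].
- have -> : ractg (a *: ractg (a' *: s) b') b = ractg ((a * a') *: s) (b' * b).
    by rewrite ractgZ ractgA !ractgZ scalerA.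
  exact: bgg.
- by rewrite scaler0 ractg0; apply: bg0.
by rewrite scalerDr ractgD; apply: bgD.
Qed.
Lemma M_scale a x : M x -> M (a *: x).
Proof. by move=> H; have := M_act a 1 _ H; rewrite ractg1. Qed.
Lemma M_ract b x : M x -> M (ractg x b).
Proof. by move=> H; have := M_act 1 b _ H; rewrite scale1r. Qed.
Lemma M_add x y : M x -> M y -> M (x + y). Proof. exact: bgD. Qed.
Lemma M_0 : M 0. Proof. exact: bg0. Qed.
Lemma M_opp x : M x -> M (- x).
Proof. by move=> H; rewrite -scaleN1r; apply: M_scale. Qed.
Lemma M_sub x y : M x -> M y -> M (x - y).
Proof. by move=> Hx Hy; apply: M_add => //; apply: M_opp. Qed.
Lemma M_sum (J : Type) (r : seq J) (P : pred J) (F : J -> 'rV[T]_4) :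
  (forall j, P j -> M (F j)) -> M (\sum_(j <- r | P j) F j).
Proof. by move=> H; apply: big_ind => //; [apply: M_0 | apply: M_add]. Qed.
Lemma M_eq x y : x = y -> M y -> M x. Proof. by move=> ->. Qed.
Lemma M_subr x y : M (x - y) -> M y -> M x.
Proof. by move=> H1 H2; rewrite -(subrK y x); apply: M_add. Qed.
End Bimod.

Lemma M_mono (S S' : 'rV[T]_4 -> Prop) : (forall x, S x -> bgen S' x) ->
  forall x, bgen S x -> bgen S' x.
Proof.
move=> ST x; elim=> [a s b Ss||x1 x2 _ H1 _ H2]; last by apply: bgD.
  by apply: M_act; apply: ST.
exact: bg0.
Qed.

Lemma dwordg_nil : dwordg [::] = 0. Proof. by rewrite /dwordg big_ord0. Qed.
Lemma dwordg_cons j s : dwordg (j :: s) = ractg (dzg j) (zwg s) + zz j *: dwordg s.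
Proof.
rewrite /dwordg /= big_ord_recl /= zwg_nil scale1r drop0; congr (_ + _).
rewrite scaler_sumr; apply: eq_bigr => k _.
by rewrite /= /bump leq0n add1n !add0n zwg_cons scalerA.
Qed.
Lemma dwordg_cat s t : dwordg (s ++ t) = ractg (dwordg s) (zwg t) + zwg s *: dwordg t.
Proof.
elim: s => [|j s IH]; first by rewrite dwordg_nil ractg0 add0r zwg_nil scale1r.
rewrite cat_cons !dwordg_cons IH zwg_cat ractgD ractgA ractgZ scalerDr addrA zwg_cons scalerA.
by [].
Qed.
Lemma ddg0 : ddg 0 = 0.
Proof. by have := ddgD 0 0; rewrite addr0 => H; apply: (addrI (ddg 0)); rewrite -H addr0. Qed.
Lemma ddgN x : ddg (- x) = - ddg x.
Proof. by apply/eqP; rewrite -addr_eq0 -ddgD addNr ddg0. Qed.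
Lemma ddgB x y : ddg (x - y) = ddg x - ddg y.
Proof. by rewrite ddgD ddgN. Qed.
Lemma ddg_sum (J : Type) (r : seq J) (P : pred J) (F : J -> T) :
  ddg (\sum_(j <- r | P j) F j) = \sum_(j <- r | P j) ddg (F j).
Proof. exact: (big_morph _ ddgD ddg0). Qed.
Lemma ddgM x y : ddg (x * y) = ractg (ddg x) y + x *: ddg y.
Proof.
elim/spanI: x y => [|x1 x2 H1 H2|c s] y.
- by rewrite mul0r ddg0 ractg0 scale0r addr0.
- by rewrite mulrDl !ddgD H1 H2 ractgD scalerDl addrACA.
elim/spanI: y => [|y1 y2 H1 H2|d t].
- by rewrite mulr0 ddg0 ractg0r scaler0 addr0.
- by rewrite mulrDr !ddgD H1 H2 ractgDr scalerDr addrACA.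
have E : (c *: zwg s) * (d *: zwg t) = (c * d) *: zwg (s ++ t).
  by rewrite -scalerAl scAr scalerA zwg_cat.
rewrite E !ddgW dwordg_cat ractgZr ractgZ scalerDr !scalerA.
congr (_ + _); first by rewrite cstM cst_comm.
by rewrite -cstE -mulrA -cst_comm mulrA cstM.
Qed.
Lemma ddg_z i : ddg (zz i) = dzg i.
Proof.
by rewrite -zwg1 -[zwg _]scale1r ddgW cst_1 scale1r dwordg_cons dwordg_nil scaler0 addr0 zwg_nil ractg1.
Qed.
Lemma ddg_cst c : ddg (cst c) = 0.
Proof. by rewrite cst1 -zwg_nil ddgW dwordg_nil scaler0. Qed.
Lemma ddgC x c : ddg (cst c * x) = cst c *: ddg x.
Proof. by rewrite ddgM ddg_cst ractg0 add0r. Qed.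
Lemma ddgZ x c : ddg (c *: x) = cst c *: ddg x.
Proof. by rewrite -cstE ddgC. Qed.

Definition relAg (x : T) : Prop :=
  exists i j : 'I_4, x = zz i * zz j - cst (Rc theta j i) * (zz j * zz i).
Definition IAg : T -> Prop := igen relAg.
Definition halfg : T := cst ((2 : CC)^-1).
Definition fAg : T := halfg * (zz 0 * zz 2 + zz 1 * zz 3 - 1).
Definition IBg : T -> Prop := igen (fun x => relAg x \/ x = fAg).
Definition ZAg (v : 'rV[T]_4) : Prop := forall i, IAg (v 0 i).
Definition ZBg : 'rV[T]_4 -> Prop :=
  bgen (fun v => ZAg v \/ (exists w, v = fAg *: w)
                      \/ (exists w, v = ractg w fAg) \/ v = ddg fAg).
Definition gupg (i j : 'I_4) : T :=
  if nat_of_ord j == ((nat_of_ord i + 2) %% 4)%N then 2%:R else 0.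
Definition hlowg (i j : 'I_4) : T :=
  if nat_of_ord j == ((nat_of_ord i + 2) %% 4)%N then
    (if odd i then - halfg else halfg) else 0.
Definition ginvBg (om eta : 'rV[T]_4) : T :=
  \sum_(i < 4) \sum_(j < 4) om 0 i * twg i (eta 0 j) * (gupg i j - zz i * zz j).
Definition ZQg (IC : T -> Prop) : 'rV[T]_4 -> Prop :=
  bgen (fun v => ZBg v \/
     exists a w, IC a /\ (v = a *: w \/ v = ractg w a)).
Definition NClg (IC : T -> Prop) : 'rV[T]_4 -> Prop :=
  bgen (fun v => ZQg IC v \/ exists a, IC a /\ v = ddg a).
Definition nchg (IC : T -> Prop) (nu : 'rV[T]_4) : Prop :=
  [/\ forall b : T, ZBg (b *: nu - ractg nu b),
      IC (ginvBg nu nu - 1),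
      NClg IC nu,
      forall v, NClg IC v -> exists c : T, ZQg IC (v - c *: nu)
    & forall c : T, ZQg IC (c *: nu) -> IC c].
Definition ftilg : T := \sum_(i < 4) \sum_(j < 4) halfg * hlowg i j * zz i * zz j.
Definition IC13g : T -> Prop :=
  igen (fun x => relAg x \/ x = fAg \/ x = ftilg).
Definition nutilg : 'rV[T]_4 := ddg ftilg.
Definition Pitilg (om : 'rV[T]_4) : 'rV[T]_4 := om - ginvBg om nutilg *: nutilg.

Lemma IA_IB x : IAg x -> IBg x.
Proof. by apply: I_mono => y H; left. Qed.
Lemma IA_IC x : IAg x -> IC13g x.
Proof. by apply: I_mono => y H; left. Qed.
Lemma IB_IC x : IBg x -> IC13g x.
Proof. by apply: I_mono => y [H|H]; [left|right; left]. Qed.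
Lemma IC_fA : IC13g fAg.
Proof. by apply: I_gen; right; left. Qed.
Lemma IC_ftil : IC13g ftilg.
Proof. by apply: I_gen; right; right. Qed.
Lemma IA_rel i j : IAg (zz i * zz j - cst (Rc theta j i) * (zz j * zz i)).
Proof. by apply: I_gen; exists i, j. Qed.

Lemma sum4 (V : zmodType) (F : 'I_4 -> V) :
  \sum_(i < 4) F i = F 0 + F 1 + F 2 + F 3.
Proof.
rewrite !big_ord_recl big_ord0 addr0 !addrA.
have E1 : lift ord0 (ord0 : 'I_3) = 1 by apply: val_inj.
have E2 : lift ord0 (lift ord0 (ord0 : 'I_2)) = 2 by apply: val_inj.
have E3 : lift ord0 (lift ord0 (lift ord0 (ord0 : 'I_1))) = 3 by apply: val_inj.
by rewrite E1 E2 E3.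
Qed.

Lemma commW k s : IAg (zz k * zwg s - chi k s *: (zwg s * zz k)).
Proof.
elim: s => [|j s IH].
  by rewrite zwg_nil chi_nil scale1r mulr1 mul1r subrr; apply: I_0.
set r := Rc theta j k.
have -> : zz k * zwg (j :: s) - chi k (j :: s) *: (zwg (j :: s) * zz k)
   = (zz k * zz j - cst r * (zz j * zz k)) * zwg s
     + r *: (zz j * (zz k * zwg s - chi k s *: (zwg s * zz k))).
  rewrite zwg_cons chi_cons -/r mulrBl mulrBr scAr scalerBr scalerA cstE -scalerAl !mulrA.
  by rewrite addrA subrK.
apply: I_add; first by apply: I_mulr; apply: IA_rel.
by apply: I_scale; apply: I_mull.
Qed.

Lemma comm k b : IAg (zz k * b - twg k b * zz k).
Proof.
elim/spanI: b => [|x y Hx Hy|c s].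
- by rewrite mulr0 twg0 mul0r subrr; apply: I_0.
- rewrite mulrDr twgD mulrDl opprD addrACA; exact: I_add.
rewrite twgW scAr -scalerA -!scalerAl -scalerBr; apply: I_scale; exact: commW.
Qed.

Lemma comm' k b : IAg (twg k b * zz k - zz k * b).
Proof. by rewrite -opprB; apply: I_opp; apply: comm. Qed.

Lemma Rc_pair (i k l : 'I_4) : nat_of_ord k = ((nat_of_ord i + 2) %% 4)%N ->
  Rc theta l i * Rc theta l k = 1.
Proof.
case: i => [[|[|[|[|i]]]] Hi] //; case: k => [[|[|[|[|k]]]] Hk] //= H;
  case: l => [[|[|[|[|l]]]] Hl] //;
  rewrite /Rc /= ?mul1r ?mulr1 ?cexpiN ?cexpiN' //.
Qed.

Lemma chi_pair (i k : 'I_4) s : nat_of_ord k = ((nat_of_ord i + 2) %% 4)%N ->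
  chi i s * chi k s = 1.
Proof.
move=> H; elim: s => [|l s IH]; first by rewrite !chi_nil mulr1.
by rewrite !chi_cons mulrACA IH (@Rc_pair i k l H) mulr1.
Qed.

Lemma twtw (i k : 'I_4) b : nat_of_ord k = ((nat_of_ord i + 2) %% 4)%N ->
  twg k (twg i b) = b.
Proof.
move=> H; elim/spanI: b => [|x y Hx Hy|c s]; first by rewrite !twg0.
  by rewrite !twgD Hx Hy.
by rewrite !twgW -mulrA chi_pair // mulr1.
Qed.

Lemma pair_central (i k : 'I_4) b : nat_of_ord k = ((nat_of_ord i + 2) %% 4)%N ->
  IAg (b * (zz i * zz k) - zz i * zz k * b).
Proof.
move=> H.
have Hki : nat_of_ord i = ((nat_of_ord k + 2) %% 4)%N.
  by rewrite H; case: i {H} => [[|[|[|[|i]]]] Hi].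
have -> : b * (zz i * zz k) - zz i * zz k * b =
   - (zz i * (zz k * b - twg k b * zz k)) - (zz i * twg k b - twg i (twg k b) * zz i) * zz k.
  rewrite (@twtw k i b Hki) mulrBr mulrBl !mulrA opprB.
  by rewrite [in RHS]opprB [in RHS]addrC [in RHS]addrA [in RHS]subrK.
apply: I_sub; first by apply: I_opp; apply: I_mull; apply: comm.
by apply: I_mulr; apply: comm.
Qed.
Definition A0 := zz 0 * zz 2.
Definition B0 := zz 1 * zz 3.
Definition C0 := zz 2 * zz 0.
Definition D0 := zz 3 * zz 1.
Definition LC (a b c d e : CC) : T := a *: A0 + b *: B0 + c *: C0 + d *: D0 + e *: 1.
Local Notation h := ((2 : CC)^-1).
Local Notation q := ((2 : CC)^-1 * (2 : CC)^-1).

Lemma add5 (V : zmodType) (x1 x2 x3 x4 x5 y1 y2 y3 y4 y5 : V) :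
  (x1 + x2 + x3 + x4 + x5) + (y1 + y2 + y3 + y4 + y5) =
  (x1 + y1) + (x2 + y2) + (x3 + y3) + (x4 + y4) + (x5 + y5).
Proof.
rewrite addrACA; congr (_ + _); rewrite addrACA; congr (_ + _).
by rewrite addrACA; congr (_ + _); rewrite addrACA.
Qed.

Lemma LC_add a b c d e a' b' c' d' e' :
  LC a b c d e + LC a' b' c' d' e' = LC (a + a') (b + b') (c + c') (d + d') (e + e').
Proof. by rewrite /LC add5 !scalerDl. Qed.
Lemma LC_scale k a b c d e : k *: LC a b c d e = LC (k * a) (k * b) (k * c) (k * d) (k * e).
Proof. by rewrite /LC !scalerDr !scalerA. Qed.
Lemma LC_opp a b c d e : - LC a b c d e = LC (- a) (- b) (- c) (- d) (- e).
Proof. by rewrite -scaleN1r LC_scale !mulN1r. Qed.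
Lemma LC_sub a b c d e a' b' c' d' e' :
  LC a b c d e - LC a' b' c' d' e' = LC (a - a') (b - b') (c - c') (d - d') (e - e').
Proof. by rewrite LC_opp LC_add. Qed.
Lemma LC_mulC k a b c d e : cst k * LC a b c d e = LC (k * a) (k * b) (k * c) (k * d) (k * e).
Proof. by rewrite cstE LC_scale. Qed.

Lemma LC_I a b c d e : a + c = 0 -> b + d = 0 -> e = 0 -> IAg (LC a b c d e).
Proof.
move=> /eqP; rewrite addr_eq0 => /eqP -> /eqP; rewrite addr_eq0 => /eqP -> ->.
have -> : LC (- c) (- d) c d 0 = LC (- c) 0 c 0 0 + LC 0 (- d) 0 d 0.
  by rewrite LC_add !addr0 !add0r.
have HC : IAg (C0 - A0).
  have -> : C0 - A0 = zz 2 * zz 0 - cst (Rc theta 0 2) * (zz 0 * zz 2).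
    by have -> : Rc theta 0 2 = 1 by []; rewrite cst_1 mul1r.
  exact: IA_rel.
have HD : IAg (D0 - B0).
  have -> : D0 - B0 = zz 3 * zz 1 - cst (Rc theta 1 3) * (zz 1 * zz 3).
    by have -> : Rc theta 1 3 = 1 by []; rewrite cst_1 mul1r.
  exact: IA_rel.
apply: I_add.
  have -> : LC (- c) 0 c 0 0 = c *: (C0 - A0).
    by rewrite /LC !scale0r !addr0 scaleNr scalerBr addrC.
  exact: I_scale.
have -> : LC 0 (- d) 0 d 0 = d *: (D0 - B0).
  by rewrite /LC !scale0r !addr0 add0r scaleNr scalerBr addrC.
exact: I_scale.
Qed.

Lemma hM x : halfg * x = h *: x.
Proof. exact: cstE. Qed.

Lemma ftilE : ftilg = LC q (- q) q (- q) 0.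
Proof.
rewrite /ftilg !sum4 /hlowg /= !mulr0 !mul0r !add0r !addr0.
rewrite !mulrN !mulNr -!mulrA !hM !scalerA /LC scale0r addr0 !scaleNr.
by rewrite -/A0 -/B0 -/C0 -/D0.
Qed.

Lemma fAE : fAg = LC h h 0 0 (- h).
Proof.
rewrite /fAg hM !scalerDr scalerN /LC !scale0r !addr0 scaleNr.
by rewrite -/A0 -/B0.
Qed.
Lemma part1 : IAg (ftilg - halfg * (zz 0 * zz 2 - zz 1 * zz 3)).
Proof.
have -> : halfg * (zz 0 * zz 2 - zz 1 * zz 3) = LC h (- h) 0 0 0.
  by rewrite hM scalerBr /LC !scale0r !addr0 scaleNr.
by rewrite ftilE LC_sub; apply: LC_I; rewrite ?subr0 ?opprK ?subrr //; field.
Qed.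

Lemma f_add (b x y : T) : b * (x + y) - (x + y) * b = (b * x - x * b) + (b * y - y * b).
Proof. by rewrite mulrDr mulrDl opprD addrACA. Qed.
Lemma f_scale (b x : T) k : b * (k *: x) - (k *: x) * b = k *: (b * x - x * b).
Proof. by rewrite scAr -scalerAl scalerBr. Qed.

Lemma centralLC b a1 a2 a3 a4 a5 : IAg (b * LC a1 a2 a3 a4 a5 - LC a1 a2 a3 a4 a5 * b).
Proof.
rewrite /LC !f_add !f_scale mulr1 mul1r subrr scaler0 addr0.
apply: I_add; last by apply: I_scale; apply: (@pair_central 3 1).
apply: I_add; last by apply: I_scale; apply: (@pair_central 2 0).
apply: I_add; last by apply: I_scale; apply: (@pair_central 1 3).
by apply: I_scale; apply: (@pair_central 0 2).
Qed.

Lemma part2 b : IBg (b * ftilg - ftilg * b).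
Proof. by apply: IA_IB; rewrite ftilE; apply: centralLC. Qed.

Lemma ddg_zz i j : ddg (zz i * zz j) = (Rc theta j i *: zz j) *: dzg i + zz i *: dzg j.
Proof. by rewrite ddgM !ddg_z ractg_dz twg_z. Qed.

Lemma ddg1 : ddg 1 = 0.
Proof. by rewrite -cst_1 ddg_cst. Qed.

Lemma ddLC a b c d e : ddg (LC a b c d e) =
  cst a *: ddg A0 + cst b *: ddg B0 + cst c *: ddg C0 + cst d *: ddg D0.
Proof. by rewrite /LC !ddgD !ddgZ ddg1 scaler0 addr0. Qed.

Lemma dz_comp i k : (dzg i) 0 k = (i == k)%:R.
Proof. by rewrite /dzg mxE eqxx andTb eq_sym. Qed.

Definition nuv (k : 'I_4) : T := \sum_(i < 4) hlowg i k * zz i.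

Lemma nuE k : nutilg 0 k = nuv k.
Proof.
rewrite /nutilg ftilE ddLC /A0 /B0 /C0 /D0 !ddg_zz /nuv sum4 /hlowg.
rewrite !mxE.
have R20 : Rc theta 2 0 = 1 by [].
have R31 : Rc theta 3 1 = 1 by [].
have R02 : Rc theta 0 2 = 1 by [].
have R13 : Rc theta 1 3 = 1 by [].
case: k => [[|[|[|[|k]]]] Hk] //=;
 rewrite R20 R31 R02 R13 ?scale1r ?mulr0 ?mulr1 ?addr0 ?add0r ?mul0r ?addr0 ?add0r ?mulNr ?hM ?cstE
   -?scaleNr ?scaler0 ?addr0 ?add0r -scalerDl; congr (_ *: _); by field.
Qed.
Lemma nu0 : nutilg 0 0 = h *: zz 2.
Proof. by rewrite nuE /nuv sum4 /hlowg /= !mul0r !add0r addr0 hM. Qed.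
Lemma nu1 : nutilg 0 1 = (- h) *: zz 3.
Proof. by rewrite nuE /nuv sum4 /hlowg /= !mul0r !add0r mulNr hM scaleNr. Qed.
Lemma nu2 : nutilg 0 2 = h *: zz 0.
Proof. by rewrite nuE /nuv sum4 /hlowg /= !mul0r !addr0 hM. Qed.
Lemma nu3 : nutilg 0 3 = (- h) *: zz 1.
Proof. by rewrite nuE /nuv sum4 /hlowg /= !mul0r add0r !addr0 mulNr hM scaleNr. Qed.

Lemma LCa (x : CC) : x *: A0 = LC x 0 0 0 0.
Proof. by rewrite /LC !scale0r !addr0. Qed.
Lemma LCb (x : CC) : x *: B0 = LC 0 x 0 0 0.
Proof. by rewrite /LC !scale0r !addr0 add0r. Qed.
Lemma LCc (x : CC) : x *: C0 = LC 0 0 x 0 0.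
Proof. by rewrite /LC !scale0r !addr0 !add0r. Qed.
Lemma LCd (x : CC) : x *: D0 = LC 0 0 0 x 0.
Proof. by rewrite /LC !scale0r !addr0 !add0r. Qed.
Lemma LCe (x : CC) : x *: 1 = LC 0 0 0 0 x.
Proof. by rewrite /LC !scale0r !add0r. Qed.
Lemma scz (x : CC) i j : (x *: zz i) * zz j = x *: (zz i * zz j).
Proof. by rewrite -scalerAl. Qed.

Definition psi0 : T := \sum_(j < 4) nutilg 0 j * zz j.
Lemma psi0E : psi0 = LC h (- h) h (- h) 0.
Proof.
rewrite /psi0 sum4 nu0 nu1 nu2 nu3 !scz -/A0 -/B0 -/C0 -/D0 LCa LCb LCc LCd !LC_add.
by congr LC; rewrite ?add0r ?addr0.
Qed.
Lemma psi0_IC : IC13g psi0.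
Proof.
have -> : psi0 = cst 2 * ftilg.
  by rewrite psi0E ftilE LC_mulC; congr LC; rewrite ?mulr0 //; field.
by apply: I_mull; apply: IC_ftil.
Qed.

Definition zs (i : 'I_4) : T := (-1) ^+ i * zz i.
Definition phi (v : 'rV[T]_4) : T := \sum_(i < 4) v 0 i * zs i.
Lemma phiD v w : phi (v + w) = phi v + phi w.
Proof. by rewrite /phi -big_split; apply: eq_bigr => i _; rewrite mxE mulrDl. Qed.
Lemma phiZ a v : phi (a *: v) = a * phi v.
Proof. by rewrite /phi mulr_sumr; apply: eq_bigr => i _; rewrite mxE mulrA. Qed.
Lemma phi0 : phi 0 = 0.
Proof. by rewrite /phi big1 // => i _; rewrite mxE mul0r. Qed.
Lemma phiN v : phi (- v) = - phi v.
Proof. by rewrite -scaleN1r phiZ mulN1r. Qed.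
Lemma phiB v w : phi (v - w) = phi v - phi w.
Proof. by rewrite phiD phiN. Qed.
Lemma phi_dz i : phi (dzg i) = zs i.
Proof.
rewrite /phi (bigD1 i) //= dz_comp eqxx mul1r big1 ?addr0 // => j ne.
by rewrite dz_comp eq_sym (negbTE ne) mul0r.
Qed.
Lemma phi_ract v b : IAg (phi (ractg v b) - phi v * b).
Proof.
rewrite /phi mulr_suml -sumrB; apply: I_sum => i _.
rewrite mxE -!mulrA -mulrBr; apply: I_mull.
rewrite /zs [twg i b * _]mulrA (commr_sign (twg i b) i) -mulrA -mulrBr.
by apply: I_mull; apply: comm'.
Qed.

Lemma phi_gen (S : 'rV[T]_4 -> Prop) : (forall s, S s -> IC13g (phi s)) ->
  forall v, bgen S v -> IC13g (phi v).
Proof.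
move=> HS v; elim=> [a s b Ss||x y _ Hx _ Hy].
- have H1 := IA_IC _ (phi_ract (a *: s) b).
  have H2 : IC13g (phi (a *: s) * b) by rewrite phiZ; apply: I_mulr; apply: I_mull; apply: HS.
  exact: (I_subr _ _ H1 H2).
- by rewrite phi0; apply: I_0.
by rewrite phiD; apply: I_add.
Qed.

Lemma zs0 : zs 0 = zz 0.
Proof. by rewrite /zs (_ : nat_of_ord (0 : 'I_4) = 0%N) // expr0 mul1r. Qed.
Lemma zs1 : zs 1 = - zz 1.
Proof. by rewrite /zs (_ : nat_of_ord (1 : 'I_4) = 1%N) // expr1 mulN1r. Qed.
Lemma zs2 : zs 2 = zz 2.
Proof. by rewrite /zs (_ : nat_of_ord (2 : 'I_4) = 2%N) // sqrrN expr1n mul1r. Qed.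
Lemma zs3 : zs 3 = - zz 3.
Proof.
by rewrite /zs (_ : nat_of_ord (3 : 'I_4) = 3%N) // exprS sqrrN expr1n mulr1 mulN1r.
Qed.

Lemma phi_ddA : phi (ddg A0) = C0 + A0.
Proof.
rewrite /A0 ddg_zz phiD !phiZ !phi_dz zs0 zs2.
have -> : Rc theta 2 0 = 1 by [].
by rewrite scale1r.
Qed.
Lemma phi_ddB : phi (ddg B0) = - D0 - B0.
Proof.
rewrite /B0 ddg_zz phiD !phiZ !phi_dz zs1 zs3.
have -> : Rc theta 3 1 = 1 by [].
by rewrite scale1r !mulrN.
Qed.

Lemma phi_ddfA : IC13g (phi (ddg fAg)).
Proof.
have -> : phi (ddg fAg) = psi0.
  rewrite fAE ddLC !phiD !phiZ cst_0 !mul0r !addr0 phi_ddA phi_ddB.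
  rewrite psi0E !cstE.
  rewrite -[A0]scale1r -[B0]scale1r -[C0]scale1r -[D0]scale1r LCa LCb LCc LCd.
  by rewrite !LC_opp !LC_add !LC_scale !LC_add; congr LC; ring.
exact: psi0_IC.
Qed.
Lemma phi_ZB v : ZBg v -> IC13g (phi v).
Proof.
apply: phi_gen => s [HA | [[w ->] | [[w ->] | ->]]].
- by apply: I_sum => i _; apply: I_mulr; apply: IA_IC; apply: HA.
- by rewrite phiZ; apply: I_mulr; apply: IC_fA.
- apply: (I_subr _ _ (IA_IC _ (phi_ract w fAg))).
  by apply: I_mull; apply: IC_fA.
exact: phi_ddfA.
Qed.

Lemma phi_ZQ v : ZQg IC13g v -> IC13g (phi v).
Proof.
apply: phi_gen => s [HB | [a [w [Ha [-> | ->]]]]].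
- exact: phi_ZB.
- by rewrite phiZ; apply: I_mulr.
apply: (I_subr _ _ (IA_IC _ (phi_ract w a))).
by apply: I_mull.
Qed.

Lemma phinu : phi nutilg = LC h h h h 0.
Proof.
rewrite /phi sum4 nu0 nu1 nu2 nu3 zs0 zs1 zs2 zs3 !mulrN !scz -/A0 -/B0 -/C0 -/D0.
rewrite -!scaleNr LCa LCb LCc LCd !LC_add; congr LC; ring.
Qed.

Lemma phinu1 : IC13g (phi nutilg - 1).
Proof.
have E1 : (1 : T) = LC 0 0 0 0 1 by rewrite -LCe scale1r.
have -> : phi nutilg - 1 = cst 2 * fAg + LC (- h) (- h) h h 0.
  by rewrite phinu E1 LC_sub fAE LC_mulC LC_add; congr LC; field.
apply: I_add; first by apply: I_mull; apply: IC_fA.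
apply: IA_IC; apply: LC_I; rewrite ?addNr //.
Qed.

Definition psi (i : 'I_4) : T :=
  \sum_(j < 4) twg i (nutilg 0 j) * (gupg i j - zz i * zz j).

Lemma ginvB_psi om : ginvBg om nutilg = \sum_(i < 4) om 0 i * psi i.
Proof.
rewrite /ginvBg; apply: eq_bigr => i _; rewrite /psi mulr_sumr.
by apply: eq_bigr => j _; rewrite mulrA.
Qed.

Lemma I4_cases (P : 'I_4 -> Prop) : P 0 -> P 1 -> P 2 -> P 3 -> forall i, P i.
Proof.
move=> P0 P1 P2 P3; case=> [[|[|[|[|i]]]] Hi] //.
- by rewrite (_ : Ordinal Hi = 0) //; apply: val_inj.
- by rewrite (_ : Ordinal Hi = 1) //; apply: val_inj.
- by rewrite (_ : Ordinal Hi = 2) //; apply: val_inj.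
- by rewrite (_ : Ordinal Hi = 3) //; apply: val_inj.
Qed.

Lemma psi_g i : \sum_(j < 4) twg i (nutilg 0 j) * gupg i j = zs i.
Proof.
elim/I4_cases: i; rewrite sum4 /gupg /= ?mulr0 ?add0r ?addr0.
- rewrite nu2 twgZ twg_z (_ : Rc theta _ _ = 1) // scale1r mulr_natr scalerMnl zs0.
  rewrite -[RHS]scale1r; congr (_ *: _); rewrite mulr2n; by field.
- rewrite nu3 twgZ twg_z (_ : Rc theta _ _ = 1) // scale1r mulr_natr scalerMnl zs1.
  rewrite -[in RHS]scaleN1r; congr (_ *: _); rewrite mulr2n; by field.
- rewrite nu0 twgZ twg_z (_ : Rc theta _ _ = 1) // scale1r mulr_natr scalerMnl zs2.
  rewrite -[RHS]scale1r; congr (_ *: _); rewrite mulr2n; by field.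
- rewrite nu1 twgZ twg_z (_ : Rc theta _ _ = 1) // scale1r mulr_natr scalerMnl zs3.
  rewrite -[in RHS]scaleN1r; congr (_ *: _); rewrite mulr2n; by field.
Qed.

Lemma psi_zz i : IC13g (\sum_(j < 4) twg i (nutilg 0 j) * (zz i * zz j)).
Proof.
have -> : \sum_(j < 4) twg i (nutilg 0 j) * (zz i * zz j) =
  \sum_(j < 4) (twg i (nutilg 0 j) * zz i - zz i * nutilg 0 j) * zz j + zz i * psi0.
  rewrite /psi0 mulr_sumr -big_split /=; apply: eq_bigr => j _.
  by rewrite mulrBl !mulrA subrK.
apply: I_add; last by apply: I_mull; apply: psi0_IC.
by apply: I_sum => j _; apply: I_mulr; apply: IA_IC; apply: comm'.
Qed.

Lemma psiE i : IC13g (psi i - zs i).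
Proof.
have -> : psi i - zs i = - \sum_(j < 4) twg i (nutilg 0 j) * (zz i * zz j).
  rewrite /psi.
  have -> : \sum_(j < 4) twg i (nutilg 0 j) * (gupg i j - zz i * zz j) =
    \sum_(j < 4) twg i (nutilg 0 j) * gupg i j - \sum_(j < 4) twg i (nutilg 0 j) * (zz i * zz j).
    by rewrite -sumrB; apply: eq_bigr => j _; rewrite mulrBr.
  by rewrite psi_g addrC addKr.
by apply: I_opp; apply: psi_zz.
Qed.

Lemma part_ginv : IC13g (ginvBg nutilg nutilg - 1).
Proof.
have -> : ginvBg nutilg nutilg - 1 =
  \sum_(i < 4) nutilg 0 i * (psi i - zs i) + (phi nutilg - 1).
  rewrite ginvB_psi /phi addrA -big_split /=; congr (_ - _).
  by apply: eq_bigr => i _; rewrite mulrBr subrK.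
apply: I_add; last exact: phinu1.
by apply: I_sum => i _; apply: I_mull; apply: psiE.
Qed.

Lemma part_e c : ZQg IC13g (c *: nutilg) -> IC13g c.
Proof.
move=> /phi_ZQ; rewrite phiZ => H.
apply: (I_subr _ (c * phi nutilg)) => //.
have -> : c - c * phi nutilg = - (c * (phi nutilg - 1)) by rewrite mulrBr mulr1 opprB.
by apply: I_opp; apply: I_mull; apply: phinu1.
Qed.

Lemma ginv_dz j : ginvBg (dzg j) nutilg = psi j.
Proof.
rewrite ginvB_psi (bigD1 j) //= dz_comp eqxx mul1r big1 ?addr0 // => i ne.
by rewrite dz_comp eq_sym (negbTE ne) mul0r.
Qed.

Lemma part5 j : ZQg IC13g (Pitilg (dzg j) - (dzg j + ((-1) ^+ j.+1 * zz j) *: nutilg)).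
Proof.
rewrite /Pitilg ginv_dz exprS mulN1r mulNr -/(zs j).
have -> : dzg j - psi j *: nutilg - (dzg j + (- zs j) *: nutilg) =
   (- (psi j - zs j)) *: nutilg.
  rewrite opprD addrACA subrr add0r !scaleNr scalerBl opprB opprK.
  by rewrite addrC.
apply: M_gen; right; exists (- (psi j - zs j)), nutilg; split; last by left.
by apply: I_opp; apply: psiE.
Qed.
Lemma part3 : ZBg (nutilg - \sum_(i < 4) \sum_(j < 4) (hlowg i j * zz i) *: dzg j).
Proof.
have -> : nutilg = \sum_(i < 4) \sum_(j < 4) (hlowg i j * zz i) *: dzg j.
  apply/rowP => k; rewrite nuE /nuv summxE; apply: eq_bigr => i _.
  rewrite summxE (bigD1 k) //= mxE dz_comp eqxx mulr1 big1 ?addr0 // => j ne.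
  by rewrite mxE dz_comp (negbTE ne) mulr0.
by rewrite subrr; apply: M_0.
Qed.

Lemma centr_aux (i k : 'I_4) (c : CC) b : nat_of_ord k = ((nat_of_ord i + 2) %% 4)%N ->
  IAg (b * (c *: zz k) - (c *: zz k) * twg i b).
Proof.
move=> H; rewrite scAr -scalerAl -scalerBr; apply: I_scale.
rewrite -{1}(@twtw i k b H); exact: comm'.
Qed.

Lemma central_nu b : ZBg (b *: nutilg - ractg nutilg b).
Proof.
apply: M_gen; left => i; rewrite !mxE.
elim/I4_cases: i.
- by rewrite nu0; apply: (@centr_aux 0 2).
- by rewrite nu1; apply: (@centr_aux 1 3).
- by rewrite nu2; apply: (@centr_aux 2 0).
- by rewrite nu3; apply: (@centr_aux 3 1).
Qed.

Lemma ZB_ZQ v : ZBg v -> ZQg IC13g v.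
Proof. by move=> H; apply: M_gen; left. Qed.

Lemma ractnu b : ZQg IC13g (ractg nutilg b - b *: nutilg).
Proof. by apply: ZB_ZQ; rewrite -opprB; apply: M_opp; apply: central_nu. Qed.

Lemma act_nu a b c s : ZQg IC13g (s - c *: nutilg) ->
  ZQg IC13g (ractg (a *: s) b - (a * c * b) *: nutilg).
Proof.
move=> H.
have -> : ractg (a *: s) b - (a * c * b) *: nutilg =
   ractg (a *: (s - c *: nutilg)) b + (a * c) *: (ractg nutilg b - b *: nutilg).
  rewrite scalerBr ractgB scalerBr !scalerA [ractg ((a * c) *: _) b]ractgZ.
  by rewrite addrA subrK.
apply: M_add; first by apply: M_act.
by apply: M_scale; apply: ractnu.
Qed.

Lemma dd_IC x : IC13g x -> exists c, ZQg IC13g (ddg x - c *: nutilg).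
Proof.
elim=> [u s v Hs||x1 x2 _ [c1 H1] _ [c2 H2]].
- have E : ddg (u * s * v) =
    ractg (ddg u) (s * v) + u *: ractg (ddg s) v + (u * s) *: ddg v.
    by rewrite ddgM ddgM ractgD ractgA ractgZ.
  have HX : ZQg IC13g (ractg (ddg u) (s * v)).
    apply: M_gen; right; exists (s * v), (ddg u); split; last by right.
    by apply: I_mulr; apply: I_gen.
  have HY : ZQg IC13g ((u * s) *: ddg v).
    apply: M_gen; right; exists (u * s), (ddg v); split; last by left.
    by apply: I_mull; apply: I_gen.
  move: E HX HY; case: Hs => [[i [j ->]] | [-> | ->]] E HX HY.
  + exists 0; rewrite scale0r subr0 E.
    have -> : ddg (zz i * zz j - cst (Rc theta j i) * (zz j * zz i)) = 0.
      rewrite ddgB ddgC !ddg_zz !scalerDr !scalerA.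
      have -> : cst (Rc theta j i) * (Rc theta i j *: zz i) = zz i.
        by rewrite cstE scalerA Rc_inv scale1r.
      by rewrite cstE [X in _ - X]addrC subrr.
    rewrite ractg0 scaler0 addr0; apply: M_add => //.
  + exists 0; rewrite scale0r subr0 E; apply: M_add => //; apply: M_add => //.
    rewrite -ractgZ; apply: bgg; left; apply: M_gen; right; right; right; done.
  + exists (u * v); rewrite E -/nutilg.
    have -> : ractg (ddg u) (ftilg * v) + u *: ractg nutilg v + (u * ftilg) *: ddg v - (u * v) *: nutilg
      = ractg (ddg u) (ftilg * v) + (u * ftilg) *: ddg v + u *: (ractg nutilg v - v *: nutilg).
      by rewrite scalerBr scalerA [in RHS]addrA (addrAC (ractg (ddg u) (ftilg * v))).
    apply: M_add; first by apply: M_add.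
    by apply: M_scale; apply: ractnu.
- by exists 0; rewrite ddg0 scale0r subr0; apply: M_0.
exists (c1 + c2); rewrite ddgD scalerDl opprD addrACA; exact: M_add.
Qed.

Lemma part_d v : NClg IC13g v -> exists c, ZQg IC13g (v - c *: nutilg).
Proof.
elim=> [a s b Hs||x y _ [c1 H1] _ [c2 H2]].
- have [c0 Hc0] : exists c0, ZQg IC13g (s - c0 *: nutilg).
    case: Hs => [Hs | [x [Hx ->]]]; last exact: dd_IC.
    by exists 0; rewrite scale0r subr0.
  by exists (a * c0 * b); apply: act_nu.
- by exists 0; rewrite scale0r subr0; apply: M_0.
exists (c1 + c2); rewrite scalerDl opprD addrACA; exact: M_add.
Qed.

Theorem gen_main :
  IAg (ftilg - halfg * (zz 0 * zz 2 - zz 1 * zz 3)) /\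
  (forall b, IBg (b * ftilg - ftilg * b)) /\
  ZBg (nutilg - \sum_(i < 4) \sum_(j < 4) (hlowg i j * zz i) *: dzg j) /\
  nchg IC13g nutilg /\
  (forall j : 'I_4, ZQg IC13g (Pitilg (dzg j) - (dzg j + ((-1) ^+ j.+1 * zz j) *: nutilg))).
Proof.
split; first exact: part1.
split; first exact: part2.
split; first exact: part3.
split; last exact: part5.
split.
- exact: central_nu.
- exact: part_ginv.
- by apply: M_gen; right; exists ftilg; split => //; apply: IC_ftil.
- exact: part_d.
exact: part_e.
Qed.
End Gen.
End Aux.

Section Aux.
Variable R : realType.
Variable theta : R.

Local Notation Fr := (Fr R).
Local Notation Om := (Om R).
Local Notation CC := (CC R).
Local Notation z := (z R).
Local Notation dz := (dz R).
Local Notation tw := (tw theta).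
Local Notation ract := (ract theta).
Local Notation chi := (chi theta).
Local Notation dword := (dword theta).
Local Notation dd := (dd theta).
Local Notation zw := (zw R).
Local Notation cstF := (fun c : CC => (c%:MP : Fr)).

Lemma ig_to (S S' : Fr -> Prop) : (forall x, S' x -> S x) ->
  forall x, igen R Fr S' x -> ideal_gen S x.
Proof.
move=> H x; elim=> [u s v Hs||x1 x2 _ H1 _ H2].
- by apply: ig_gen; apply: H.
- exact: ig_0.
exact: ig_add.
Qed.
Lemma ig_from (S S' : Fr -> Prop) : (forall x, S x -> S' x) ->
  forall x, ideal_gen S x -> igen R Fr S' x.
Proof.
move=> H x; elim=> [u s v Hs||x1 x2 _ H1 _ H2].
- by apply: igg; apply: H.
- exact: ig0.
exact: igD.
Qed.
Lemma bg_to (S S' : Om -> Prop) : (forall x, S' x -> S x) ->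
  forall x, bgen R Fr tw S' x -> bimod_gen theta S x.
Proof.
move=> H x; elim=> [a s b Hs||x1 x2 _ H1 _ H2].
- by apply: bg_gen; apply: H.
- exact: bg_0.
exact: bg_add.
Qed.
Lemma bg_from (S S' : Om -> Prop) : (forall x, S x -> S' x) ->
  forall x, bimod_gen theta S x -> bgen R Fr tw S' x.
Proof.
move=> H x; elim=> [a s b Hs||x1 x2 _ H1 _ H2].
- by apply: bgg; apply: H.
- exact: bg0.
exact: bgD.
Qed.

Lemma IA_iff x : IA theta x <-> IAg R theta Fr cstF z x.
Proof. by split; [apply: ig_from | apply: ig_to]. Qed.
Lemma IB_iff x : IB theta x <-> IBg R theta Fr cstF z x.
Proof. by split; [apply: ig_from | apply: ig_to]. Qed.
Lemma IC_iff x : IC13 theta x <-> IC13g R theta Fr cstF z x.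
Proof. by split; [apply: ig_from | apply: ig_to]. Qed.
Lemma ZA_iff v : ZA theta v <-> ZAg R theta Fr cstF z v.
Proof. by split => H i; apply/IA_iff; apply: H. Qed.
Lemma ZB_iff v : ZB theta v <-> ZBg R theta Fr cstF z tw dd v.
Proof.
split.
- apply: bg_from => w [H|H]; [left; apply/ZA_iff | right]; exact: H.
- apply: bg_to => w [H|H]; [left; apply/ZA_iff | right]; exact: H.
Qed.
Lemma ZQ_iff v : ZQ theta (IC13 theta) v <->
   ZQg R theta Fr cstF z tw dd (IC13g R theta Fr cstF z) v.
Proof.
split.
- apply: bg_from => w [H|[a [w' [Ha H]]]]; [left; apply/ZB_iff; exact: H|].
  by right; exists a, w'; split => //; apply/IC_iff.
- apply: bg_to => w [H|[a [w' [Ha H]]]]; [left; apply/ZB_iff; exact: H|].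
  by right; exists a, w'; split => //; apply/IC_iff.
Qed.
Lemma NCl_iff v : NCl theta (IC13 theta) v <->
   NClg R theta Fr cstF z tw dd (IC13g R theta Fr cstF z) v.
Proof.
split.
- apply: bg_from => w [H|[a [Ha H]]]; [left; apply/ZQ_iff; exact: H|].
  by right; exists a; split => //; apply/IC_iff.
- apply: bg_to => w [H|[a [Ha H]]]; [left; apply/ZQ_iff; exact: H|].
  by right; exists a; split => //; apply/IC_iff.
Qed.
End Aux.

Theorem proposition4p13 (R : realType) (theta : R) :
  (* f~ = 1/2 sum h_ij z^i z^j = 1/2 (z^1 z^3 - z^2 z^4) in A (hence in B) *)
  IA theta (ftil R - halfF R * (z R 0 * z R 2 - z R 1 * z R 3)) /\
  (* f~ is central in B *)
  (forall b : Fr R, IB theta (b * ftil R - ftil R * b)) /\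
  (* nu~ = d_B f~ = sum_{ij} h_ij z^i dz^j in Omega^1_B *)
  ZB theta (nutil theta
            - \sum_(i < 4) \sum_(j < 4) (hlow R i j * z R i) *: dz R j) /\
  (* nu~ is central, g^{-1}(nu~ (x) nu~) = 1 in C, and C is a
     noncommutative hypersurface of B with basis [nu~] of N^1_C *)
  nc_hypersurface theta (IC13 theta) (nutil theta) /\
  (* Pi~(dz^i) = dz^i + (-1)^i z^i nu~ in q_!(Omega^1_B) (paper index i = j+1) *)
  (forall j : 'I_4,
     ZQ theta (IC13 theta)
       (Pitil theta (dz R j)
        - (dz R j + ((-1) ^+ j.+1 * z R j) *: nutil theta))).
Proof.
have G := @gen_main R theta (Fr R) (fun c => c%:MP) (fun c x => mul_malgC c x)
  (fun c x => @mulrCc R x c) (@scalerAr' R) (z R) (tw theta) (@twD R theta)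
  (@twW R theta) (@span_ind R) (dd theta) (@ddD R theta) (@ddW R theta).
case: G => G1 [G2 [G3 [[Ga Gb Gc Gd Ge] G5]]].
split; first exact/IA_iff.
split; first by move=> b; apply/IB_iff; apply: G2.
split; first exact/ZB_iff.
split.
  split.
  - by move=> b; apply/ZB_iff; apply: Ga.
  - exact/IC_iff.
  - exact/NCl_iff.
  - move=> v /NCl_iff /Gd [c Hc]; exists c; exact/ZQ_iff.
  - by move=> c /ZQ_iff /Ge /IC_iff.
by move=> j; apply/ZQ_iff; apply: G5.
Qed.
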